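(* Let $n,k,t$ be positive integers with $k<n$ and $t\ge 4$, let $q$ be a prime power and $\mathcal{D}$ the Desarguesian $(t-1)$-spread of $\mathrm{PG}(nt-1,q)$. Let $\nu$ be a $\mathcal{D}_{n-k-1}$-subspace, $\Pi$ an $(nt-kt+1)$-dimensional subspace containing $\nu$ such that the points of $\mathcal{B}(\Pi)$ span an $(n-k+1)$-dimensional subspace of $\mathrm{PG}(n-1,q^t)$, $\Omega$ an $(nt-kt-2)$-dimensional subspace of $\Pi$ meeting $\nu$ in an $(nt-kt-4)$-dimensional subspace, $\Gamma$ a plane of $\Pi$ skew from $\Omega$, $\bar{B}$ a minimal blocking set of $\Gamma$ disjoint from $\nu$, and $K$ the cone with vertex $\Omega$ and base $\bar{B}$. Then the blocking set $\mathcal{B}(K)$ (with respect to $(k-1)$-dimensional subspaces) of $\mathrm{PG}(n-1,q^t)$ spans a subspace of dimension $n-k+1$.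
   Context: Field reduction: each point of $\mathrm{PG}(n-1,q^t)$ corresponds to a $(t-1)$-dimensional subspace of $\mathrm{PG}(nt-1,q)$; these form the Desarguesian $(t-1)$-spread $\mathcal{D}$. A $\mathcal{D}_{r-1}$-subspace is an $(rt-1)$-dimensional subspace spanned by elements of $\mathcal{D}$. For $U\subseteq\mathrm{PG}(nt-1,q)$, $\mathcal{B}(U)$ is the set of elements of $\mathcal{D}$ meeting $U$, identified with points of $\mathrm{PG}(n-1,q^t)$. The cone with vertex $\Omega$ and base $\bar{B}$ is $\bigcup_{P\in\bar B}\langle P,\Omega\rangle$. A minimal blocking set of a plane is a point set meeting every line, no proper subset of which does so. *)

(* Defs.v *)
From HB Require Import structures.
From mathcomp Require Import all_boot all_order all_algebra all_field.
Set Implicit Arguments. Unset Strict Implicit. Unset Printing Implicit Defensive.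
Import GRing.Theory.
Local Open Scope ring_scope.

(* F = GF(q), L = GF(q^t) as a field extension of F
   of degree t = \dim {:L}.  The ambient space Vn n = L^n, viewed as an
   F-vector space of dimension n*t, realises PG(nt-1,q) (its F-subspaces),
   and, via its L-subspaces (F-subspaces closed under L-scaling),
   PG(n-1,q^t).  Projective dimension = vector dimension - 1. *)

Section FieldReduction.
Variables (F : finFieldType) (L : fieldExtType F) (n : nat).

Definition Vn := {ffun 'I_n -> L}.

Definition scaleL (c : L) (v : Vn) : Vn := [ffun i => c * v i].

(* the element of the Desarguesian spread D determined by the point <v>_L
   of PG(n-1,q^t): the F-span of { c v | c in L } *)
Definition spread_elt (v : Vn) : {vspace Vn} :=
  <<[seq scaleL c v | c <- vbasis {:L}]>>%VS.

Definition Lclosed (W : {vspace Vn}) : Prop :=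
  forall (c : L) (v : Vn), v \in W -> scaleL c v \in W.

(* W is a D_{r-1}-subspace: an (rt-1)-dimensional subspace spanned by
   elements of D *)
Definition Dsubspace (r : nat) (W : {vspace Vn}) : Prop :=
  \dim W = (r * \dim {:L})%N /\
  exists s : seq Vn, all (fun v => v != 0) s /\
    W = (\sum_(v <- s) spread_elt v)%VS.

Definition is_point (X : {vspace Vn}) : Prop := \dim X = 1%N.

Definition points_of (U : {vspace Vn}) : {vspace Vn} -> Prop :=
  fun X => is_point X /\ (X <= U)%VS.

(* B(U) for a point set U of PG(nt-1,q): the spread elements meeting U,
   identified with points of PG(n-1,q^t); v (nonzero) represents the point
   <v>_L, i.e. the spread element spread_elt v. *)
Definition Bset (U : {vspace Vn} -> Prop) : Vn -> Prop :=
  fun v => v != 0 /\ exists X, U X /\ is_point X /\ (X <= spread_elt v)%VS.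

Definition Lspan_of (P : Vn -> Prop) (W : {vspace Vn}) : Prop :=
  [/\ Lclosed W, (forall v, P v -> v \in W) &
      (forall W', Lclosed W' -> (forall v, P v -> v \in W') -> (W <= W')%VS)].

Definition pdimL (W : {vspace Vn}) : nat := ((\dim W %/ \dim {:L}).-1)%N.

Definition blocking_set_of (Gamma : {vspace Vn}) (B : {vspace Vn} -> Prop)
  : Prop :=
  (forall X, B X -> points_of Gamma X) /\
  (forall l : {vspace Vn}, \dim l = 2%N -> (l <= Gamma)%VS ->
     exists X, B X /\ (X <= l)%VS).

Definition minimal_blocking_set_of (Gamma : {vspace Vn})
  (B : {vspace Vn} -> Prop) : Prop :=
  blocking_set_of Gamma B /\
  forall B' : {vspace Vn} -> Prop, (forall X, B' X -> B X) ->
    blocking_set_of Gamma B' -> forall X, B X -> B' X.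

Definition cone (Omega : {vspace Vn}) (B : {vspace Vn} -> Prop)
  : {vspace Vn} -> Prop :=
  fun X => is_point X /\ exists P, B P /\ (X <= P + Omega)%VS.

End FieldReduction.

(* Main.v *)
Require Import Defs.
From HB Require Import structures.
From mathcomp Require Import all_boot all_order all_algebra all_field.
From mathcomp Require Import zify.
Set Implicit Arguments. Unset Strict Implicit. Unset Printing Implicit Defensive.
Import GRing.Theory.
Local Open Scope ring_scope.
Section S.
Variables (F : finFieldType) (L : fieldExtType F) (n : nat).
Definition sc (v : Vn L n) (c : L) : Vn L n := scaleL c v.
Lemma sc_lin v : linear (sc v).
Proof. move=> a c d; apply/ffunP=> i; rewrite !ffunE mulrDl scalerAl. by []. Qed.
HB.instance Definition _ v := GRing.isLinear.Build F L (Vn L n) *:%R (sc v) (sc_lin v).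
Lemma spread_img v : spread_elt v = (linfun (sc v) @: fullv)%VS.
Proof.
rewrite /spread_elt -[X in (_ @: X)%VS](span_basis (vbasisP fullv)) limg_span; congr span.
by apply: eq_map => c; rewrite lfunE.
Qed.

Lemma spreadP (v x : Vn L n) : reflect (exists c, x = scaleL c v) (x \in spread_elt v).
Proof.
rewrite spread_img; apply: (iffP memv_imgP).
  by case=> c _ ->; exists c; rewrite lfunE.
by case=> c ->; exists c; rewrite ?memvf // lfunE.
Qed.

Lemma scaleLA c d (v : Vn L n) : scaleL c (scaleL d v) = scaleL (c * d) v.
Proof. by apply/ffunP=> i; rewrite !ffunE mulrA. Qed.
Lemma scale1L (v : Vn L n) : scaleL 1 v = v.
Proof. by apply/ffunP=> i; rewrite !ffunE mul1r. Qed.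
Lemma scaleL0 c : scaleL c (0 : Vn L n) = 0.
Proof. by apply/ffunP=> i; rewrite !ffunE mulr0. Qed.
Lemma scaleLD c (u v : Vn L n) : scaleL c (u + v) = scaleL c u + scaleL c v.
Proof. by apply/ffunP=> i; rewrite !ffunE mulrDr. Qed.

Lemma spread_dim (v : Vn L n) : v != 0 -> \dim (spread_elt v) = \dim {:L}.
Proof.
move=> nz; rewrite spread_img limg_dim_eq // capfv; apply/eqP; rewrite -subv0.
apply/subvP=> c; rewrite memv_ker lfunE /= memv0 => /eqP h.
apply: contraR nz => cnz; apply/eqP/ffunP=> i.
have := congr1 (fun f : Vn L n => f i) h; rewrite /sc !ffunE => /eqP.
by rewrite mulf_eq0 (negbTE cnz) /= => /eqP.
Qed.

Lemma spread_self (v : Vn L n) : v \in spread_elt v.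
Proof. by apply/spreadP; exists 1; rewrite scale1L. Qed.

Lemma Lclosed_spread (v : Vn L n) : Lclosed (spread_elt v).
Proof. by move=> c x /spreadP [d ->]; apply/spreadP; exists (c * d); rewrite scaleLA. Qed.

Lemma Lclosed0 : Lclosed (0%VS : {vspace Vn L n}).
Proof. by move=> c x; rewrite memv0 => /eqP ->; rewrite scaleL0 mem0v. Qed.

Lemma LclosedD (U V : {vspace Vn L n}) : Lclosed U -> Lclosed V -> Lclosed (U + V)%VS.
Proof.
move=> hU hV c x /memv_addP [u uU [w wV ->]].
by rewrite scaleLD memv_add ?hU ?hV.
Qed.

Lemma Lclosed_sum (s : seq (Vn L n)) : Lclosed (\sum_(v <- s) spread_elt v)%VS.
Proof.
elim: s => [|a s IH]; first by rewrite big_nil; exact: Lclosed0.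
by rewrite big_cons; apply: LclosedD => //; exact: Lclosed_spread.
Qed.

Lemma Lclosed_back (W : {vspace Vn L n}) c (v : Vn L n) : Lclosed W -> c != 0 ->
  scaleL c v \in W -> v \in W.
Proof.
move=> hW cnz h; have := hW c^-1 _ h.
by rewrite scaleLA mulVf // scale1L.
Qed.
End S.


Theorem proposition4p11 (F : finFieldType) (L : fieldExtType F)
  (n k t : nat)
  (hk0 : (0 < k)%N) (hkn : (k < n)%N) (ht : (4 <= t)%N)
  (hL : \dim {:L}%VS = t)
  (nu Pi Omega Gamma : {vspace Vn L n}) (Bbar : {vspace Vn L n} -> Prop)
  (hnu : Dsubspace (n - k) nu)
  (hPi : \dim Pi = ((n * t - k * t + 1).+1)%N)
  (hnuPi : (nu <= Pi)%VS)
  (hBPi : exists W, Lspan_of (Bset (points_of Pi)) W /\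
                    pdimL W = (n - k + 1)%N)
  (hOm : \dim Omega = ((n * t - k * t - 2).+1)%N)
  (hOmPi : (Omega <= Pi)%VS)
  (hOmnu : \dim (Omega :&: nu) = ((n * t - k * t - 4).+1)%N)
  (hGa : \dim Gamma = 3%N)
  (hGaPi : (Gamma <= Pi)%VS)
  (hGaOm : (Gamma :&: Omega = 0)%VS)
  (hB : minimal_blocking_set_of Gamma Bbar)
  (hBnu : forall X, Bbar X -> (X :&: nu = 0)%VS) :
  exists W, Lspan_of (Bset (cone Omega Bbar)) W /\ pdimL W = (n - k + 1)%N.
Proof.
case: hBPi => W [[hWcl hWin hWmin] hdim]; exists W; split => //.
case: hB => [[hBpts hBlines] _].
have hsub : forall X, cone Omega Bbar X -> points_of Pi X.
  move=> X [Xpt [P [BP XP]]]; split => //; apply: subv_trans XP _.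
  rewrite subv_add hOmPi andbT; case: (hBpts P BP) => _ PG.
  exact: subv_trans PG hGaPi.
split => //.
  move=> v [vnz [X [hX [hXp hXs]]]]; apply: hWin; split => //.
  by exists X; split => //; apply: hsub.
move=> W' hW'cl hW'in; apply: hWmin => //.
have [P0 BP0] : exists P, Bbar P.
  have hs : size (vbasis Gamma) = 3%N by rewrite size_tuple hGa.
  have hfree := basis_free (vbasisP Gamma).
  have hmem : forall y, y \in (vbasis Gamma : seq _) -> y \in Gamma.
    by move=> y; apply: vbasis_mem.
  move: hs hfree hmem; case: (vbasis Gamma : seq _) => [//|x0 rest] /= hs.
  rewrite free_cons => /andP [_ /eqP hfr] hmem.
  have d2 : \dim <<rest>>%VS = 2%N by rewrite hfr; case: hs.
  have lG : (<<rest>> <= Gamma)%VS.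
    by apply/span_subvP => y yr; apply: hmem; rewrite inE yr orbT.
  have [X [BX _]] := hBlines <<rest>>%VS d2 lG.
  by exists X.
have hOmW : (Omega <= W')%VS.
  apply/subvP => w wO; have [->|wnz] := eqVneq w 0; first exact: mem0v.
  apply: hW'in; split => //; exists <[w]>%VS; split; last split.
  - split; first by rewrite /is_point dim_vline wnz.
    exists P0; split => //; rewrite -memvE; exact: (subvP (addvSr P0 Omega)).
  - by rewrite /is_point dim_vline wnz.
  - by rewrite -memvE spread_self.
have [dnu [s [_ hnus]]] := hnu.
have nucl : Lclosed nu by rewrite hnus; exact: Lclosed_sum.
have Nge : (4 <= n * t - k * t)%N.
  have h1 : (n * t - k * t = (n - k) * t)%N by rewrite mulnBl.
  have h2 : (t <= (n - k) * t)%N by apply: leq_pmull; rewrite subn_gt0.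
  lia.
have hnuW : (nu <= W')%VS.
  apply/subvP => v vnu; have [->|vnz] := eqVneq v 0; first exact: mem0v.
  have Unu : (spread_elt v <= nu)%VS.
    by apply/subvP => x /spreadP [c ->]; apply: nucl.
  set C := (spread_elt v :&: (Omega :&: nu))%VS.
  have Cnz : C != 0%VS.
    apply/eqP => C0.
    have := dimv_sum_cap (spread_elt v) (Omega :&: nu).
    rewrite -/C C0 dimv0 addn0 spread_dim // hL hOmnu.
    have : (\dim (spread_elt v + (Omega :&: nu)) <= \dim nu)%N.
      by apply: dimvS; rewrite subv_add Unu capvSr.
    rewrite dnu hL mulnBl; lia.
  have xC := memv_pick C.
  have xnz : vpick C != 0 by rewrite vpick0.
  move: xC => /memv_capP [/spreadP [c hc] /memv_capP [xO _]].
  have cnz : c != 0.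
    by apply: contraNneq xnz => c0; rewrite hc c0; apply/eqP/ffunP=> i; rewrite !ffunE mul0r.
  apply: (Lclosed_back hW'cl cnz); rewrite -hc; exact: (subvP hOmW).
have PiW : (Pi <= W')%VS.
  have hle : (nu + Omega <= Pi)%VS by rewrite subv_add hnuPi hOmPi.
  have hd : \dim (nu + Omega) = \dim Pi.
    have := dimv_sum_cap nu Omega; rewrite capvC hOmnu dnu hL hOm hPi mulnBl.
    lia.
  have -> : Pi = (nu + Omega)%VS.
    by apply/esym/eqP; rewrite eqEdim hle hd leqnn.
  by rewrite subv_add hnuW hOmW.
move=> v [vnz [X [[Xpt XPi] [_ XS]]]].
have Xnz : X != 0%VS by rewrite -dimv_eq0 Xpt.
have xnz : vpick X != 0 by rewrite vpick0.
have /spreadP [c hc] := subvP XS _ (memv_pick X).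
have cnz : c != 0.
  by apply: contraNneq xnz => c0; rewrite hc c0; apply/eqP/ffunP=> i; rewrite !ffunE mul0r.
apply: (Lclosed_back hW'cl cnz); rewrite -hc.
exact: (subvP PiW) (subvP XPi _ (memv_pick X)).
Qed.
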